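(* Let $R\ge1$, $\Gamma\ge1$, $1\le s_1\le n_1$, $1\le s_2\le n_2$. For all $0<\varepsilon<1$, $$\log N(S^{R,\Gamma}_{s_1,s_2},\|\cdot\|_F,\varepsilon)\le R(s_1+s_2+1)\log\!\Big(\frac{18\Gamma R}{\varepsilon}\Big)+Rs_1\log\!\Big(\frac{en_1}{s_1}\Big)+Rs_2\log\!\Big(\frac{en_2}{s_2}\Big).$$
   Context: $N(M,\|\cdot\|,\varepsilon)$ is the minimal number of $\|\cdot\|$-balls of radius $\varepsilon$ needed to cover $M$. $S^{R,\Gamma}_{s_1,s_2}$ is the set of $Z=\sum_{r=1}^R\sigma_ru^r(v^r)^T\in\mathbb{R}^{n_1\times n_2}$ with $u^r\in\mathbb{R}^{n_1}$, $v^r\in\mathbb{R}^{n_2}$, $|\mathrm{supp}(u^r)|\le s_1$, $|\mathrm{supp}(v^r)|\le s_2$, $\|u^r\|_2=\|v^r\|_2=1$ for all $r$, and $\sigma\in\mathbb{R}^R$ with $\|\sigma\|_2\le\Gamma$. *)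

(* Defs.v *)
From Stdlib Require Import Reals Lra List.
Import ListNotations.
Open Scope R_scope.

Fixpoint sumR (n : nat) (f : nat -> R) : R :=
  match n with
  | O => 0
  | S k => sumR k f + f k
  end.

Definition norm2 (n : nat) (x : nat -> R) : R :=
  sqrt (sumR n (fun i => x i ^ 2)).

Definition supp_card (n : nat) (x : nat -> R) : nat :=
  length (filter (fun i => if Req_EM_T (x i) 0 then false else true) (seq 0 n)).

(* An n1 x n2 real matrix is represented by its entries A i j, i < n1, j < n2
   (values outside this range are irrelevant). *)
Definition frob (n1 n2 : nat) (A : nat -> nat -> R) : R :=
  sqrt (sumR n1 (fun i => sumR n2 (fun j => A i j ^ 2))).

Definition mat_sub (A B : nat -> nat -> R) : nat -> nat -> R :=
  fun i j => A i j - B i j.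

Definition S_set (n1 n2 s1 s2 Rk : nat) (Gam : R) (Z : nat -> nat -> R) : Prop :=
  exists (sigma : nat -> R) (u v : nat -> nat -> R),
    (forall r, (r < Rk)%nat ->
       (supp_card n1 (u r) <= s1)%nat /\ (supp_card n2 (v r) <= s2)%nat /\
       norm2 n1 (u r) = 1 /\ norm2 n2 (v r) = 1) /\
    norm2 Rk sigma <= Gam /\
    (forall i j, (i < n1)%nat -> (j < n2)%nat ->
       Z i j = sumR Rk (fun r => sigma r * u r i * v r j)).

Definition is_cover (n1 n2 : nat) (M : (nat -> nat -> R) -> Prop) (eps : R)
    (centers : list (nat -> nat -> R)) : Prop :=
  forall Z, M Z -> exists c, In c centers /\ frob n1 n2 (mat_sub Z c) <= eps.

Definition is_covering_number (n1 n2 : nat) (M : (nat -> nat -> R) -> Prop)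
    (eps : R) (N : nat) : Prop :=
  (exists centers, length centers = N /\ is_cover n1 n2 M eps centers) /\
  (forall centers, is_cover n1 n2 M eps centers -> (N <= length centers)%nat).

(* Main.v *)
Require Import Defs.
From Stdlib Require Import Reals Lra Lia List ZArith Classical.
Import ListNotations.
Open Scope R_scope.


Lemma sumR_ext n f g : (forall i, (i < n)%nat -> f i = g i) -> sumR n f = sumR n g.
Proof. induction n; simpl; intros H; auto. rewrite IHn, H; auto. Qed.

Lemma sumR_le n f g : (forall i, (i < n)%nat -> f i <= g i) -> sumR n f <= sumR n g.
Proof. induction n; simpl; intros H; [lra|]. pose proof (H n ltac:(lia)). pose proof (IHn ltac:(intros; apply H; lia)). lra. Qed.

Lemma sumR_nonneg n f : (forall i, (i < n)%nat -> 0 <= f i) -> 0 <= sumR n f.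
Proof. intros H. apply Rle_trans with (sumR n (fun _ => 0)).
 - clear H; induction n; simpl; lra.
 - apply sumR_le; auto. Qed.

Lemma sumR_plus n f g : sumR n (fun i => f i + g i) = sumR n f + sumR n g.
Proof. induction n; simpl; [lra|]. rewrite IHn; lra. Qed.

Lemma sumR_scal n c f : sumR n (fun i => c * f i) = c * sumR n f.
Proof. induction n; simpl; [lra|]. rewrite IHn; lra. Qed.

Lemma sumR_exchange n m (f : nat -> nat -> R) :
  sumR n (fun i => sumR m (fun j => f i j)) = sumR m (fun j => sumR n (fun i => f i j)).
Proof. induction n; simpl.
 - clear f; induction m; simpl; lra.
 - rewrite IHn. rewrite <- sumR_plus. reflexivity. Qed.

Lemma sumR_prod n m a b :
  sumR n (fun i => sumR m (fun j => a i * b j)) = sumR n a * sumR m b.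
Proof. induction n; simpl; [lra|]. rewrite IHn, sumR_scal. lra. Qed.

Lemma term_le_sum n f k : (forall i, (i < n)%nat -> 0 <= f i) -> (k < n)%nat -> f k <= sumR n f.
Proof. induction n; intros H Hk; [lia|]. simpl.
 assert (0 <= sumR n f) by (apply sumR_nonneg; intros; apply H; lia).
 destruct (Nat.eq_dec k n).
 - subst. lra.
 - pose proof (H n ltac:(lia)). assert (f k <= sumR n f) by (apply IHn; [intros; apply H|]; lia). lra. Qed.

Lemma supp_card_S n x : supp_card (S n) x = (supp_card n x + (if Req_EM_T (x n) 0 then 0 else 1))%nat.
Proof. unfold supp_card. rewrite seq_S, filter_app, length_app. simpl.
 destruct (Req_EM_T (x n) 0); reflexivity. Qed.

Lemma supp_card_le n x : (supp_card n x <= n)%nat.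
Proof. induction n; [unfold supp_card; simpl; lia|]. rewrite supp_card_S.
 destruct (Req_EM_T (x n) 0); lia. Qed.

Lemma supp_card_mono n f g : (forall i, (i < n)%nat -> f i <> 0 -> g i <> 0) ->
  (supp_card n f <= supp_card n g)%nat.
Proof. induction n; intros H; [unfold supp_card; simpl; lia|]. rewrite !supp_card_S.
 assert (IH := IHn ltac:(intros; apply H; auto; lia)).
 destruct (Req_EM_T (f n) 0); destruct (Req_EM_T (g n) 0); try lia.
 exfalso; apply (H n); auto. Qed.

Lemma sumR_S n f : sumR (S n) f = sumR n f + f n.
Proof. reflexivity. Qed.

Lemma CS_supp n f : (sumR n f)^2 <= INR (supp_card n f) * sumR n (fun i => f i ^ 2).
Proof. induction n; [unfold supp_card; simpl; lra|]. rewrite !sumR_S.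
 rewrite supp_card_S. set (S0 := sumR n f) in *. set (Q := sumR n (fun i => f i ^2)) in *.
 set (c := INR (supp_card n f)) in *.
 assert (HQ : 0 <= Q) by (apply sumR_nonneg; intros; apply pow2_ge_0).
 assert (Hc : 0 <= c) by apply pos_INR.
 destruct (Req_EM_T (f n) 0) as [E|E].
 - rewrite E, Nat.add_0_r. fold c. nra.
 - rewrite plus_INR. simpl INR. fold c. set (x := f n).
   destruct (Rle_lt_dec c 0).
   + assert (c = 0) by lra. assert (S0 ^2 <= 0) by nra. assert (S0 = 0) by nra. subst; nra.
   + assert (c * (2 * S0 * x) <= c * (Q + c * x ^ 2)) by (pose proof (pow2_ge_0 (S0 - c*x)); nra).
     assert (2 * S0 * x <= Q + c * x^2) by (apply Rmult_le_reg_l with c; lra). nra. Qed.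

Lemma sq_le_sqrt_bound a b : 0 <= b -> a ^ 2 <= b ^ 2 -> a <= b.
Proof. intros. nra. Qed.

Lemma exp_le_mono x y : x <= y -> exp x <= exp y.
Proof. intros [H|H]; [left; apply exp_increasing; auto| subst; lra]. Qed.

Lemma ln_le_mono x y : 0 < x -> x <= y -> ln x <= ln y.
Proof. intros H [H'|H']; [left; apply ln_increasing; auto| subst; lra]. Qed.

Definition ext (n : nat) (k : Z) (f : nat -> Z) : nat -> Z :=
  fun i => if Nat.eqb i n then k else f i.

Fixpoint enum (n L s : nat) : list (nat -> Z) :=
  match n with
  | O => [fun _ => 0%Z]
  | S n' => map (ext n' 0%Z) (enum n' L s) ++
     match s with
     | O => []
     | S s' => flat_map (fun m => map (ext n' (Z.of_nat m)) (enum n' (L - m) s')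
                          ++ map (ext n' (- Z.of_nat m)) (enum n' (L - m) s')) (seq 1 L)
     end
  end.

Fixpoint nnzZ (n : nat) (z : nat -> Z) : nat :=
  match n with O => O | S n' => (nnzZ n' z + (if Z.eqb (z n') 0 then 0 else 1))%nat end.

Fixpoint sabs (n : nat) (z : nat -> Z) : nat :=
  match n with O => O | S n' => (sabs n' z + Z.abs_nat (z n'))%nat end.

Lemma enum_complete n : forall L s z, (nnzZ n z <= s)%nat -> (sabs n z <= L)%nat ->
  exists c, In c (enum n L s) /\ forall i, (i < n)%nat -> c i = z i.
Proof.
  induction n; intros L s z Hn Hs.
  - exists (fun _ => 0%Z). split; [left; auto| intros; lia].
  - simpl in Hn, Hs. destruct (Z.eqb_spec (z n) 0) as [E|E].
    + destruct (IHn L s z ltac:(lia) ltac:(lia)) as [c [Hc Hci]].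
      exists (ext n 0%Z c). split.
      * simpl. apply in_or_app. left. apply in_map. auto.
      * intros i Hi. unfold ext. destruct (Nat.eqb_spec i n). subst; auto. apply Hci; lia.
    + destruct s as [|s']; [lia|].
      set (m := Z.abs_nat (z n)).
      assert (Hm : (1 <= m)%nat) by (unfold m; lia).
      destruct (IHn (L - m)%nat s' z ltac:(lia) ltac:(lia)) as [c [Hc Hci]].
      assert (Hz : z n = Z.of_nat m \/ z n = (- Z.of_nat m)%Z) by (unfold m; lia).
      exists (ext n (z n) c). split.
      * simpl. apply in_or_app. right. apply in_flat_map. exists m. split.
        -- apply in_seq. lia.
        -- apply in_or_app. destruct Hz as [Hz|Hz]; rewrite Hz; [left|right]; apply in_map; auto.
      * intros i Hi. unfold ext. destruct (Nat.eqb_spec i n). subst; auto. apply Hci; lia.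
Qed.

Fixpoint lsum (l : list nat) (g : nat -> R) : R :=
  match l with [] => 0 | a :: l' => g a + lsum l' g end.

Lemma len_flat_map {B} (f : nat -> list B) l g :
  (forall x, In x l -> INR (length (f x)) <= g x) -> INR (length (flat_map f l)) <= lsum l g.
Proof. induction l; intros H; simpl; [lra|]. rewrite length_app, plus_INR.
 pose proof (H a (or_introl eq_refl)). pose proof (IHl ltac:(intros; apply H; right; auto)). lra. Qed.

Lemma lsum_le l g h : (forall x, In x l -> g x <= h x) -> lsum l g <= lsum l h.
Proof. induction l; intros H; simpl; [lra|].
 pose proof (H a (or_introl eq_refl)). pose proof (IHl ltac:(intros; apply H; right; auto)). lra. Qed.

Lemma lsum_scal l c g : lsum l (fun x => c * g x) = c * lsum l g.
Proof. induction l; simpl; [lra|]. rewrite IHl; lra. Qed.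

Lemma geom t : 0 < t -> forall len a, lsum (seq a len) (fun m => exp (- t * INR m)) <= exp (- t * (INR a - 1)) / (exp t - 1).
Proof. intros Ht. assert (Hexp : 1 + t < exp t) by (apply exp_ineq1; lra).
 induction len; intros a; simpl.
 - apply Rmult_le_pos. left; apply exp_pos. left; apply Rinv_0_lt_compat; lra.
 - pose proof (IHlen (S a)). rewrite S_INR in H.
   replace (INR a + 1 - 1) with (INR a) in H by ring.
   assert (E : exp (- t * (INR a - 1)) = exp (-t * INR a) * exp t) by (rewrite <- exp_plus; f_equal; ring).
   rewrite E. apply Rle_trans with (exp (- t * INR a) + exp (- t * INR a) / (exp t - 1)); [lra|].
   right. field. lra.
Qed.

Lemma enum_len t lam : 0 < t -> 0 < lam -> lam <= 1 -> forall n L s,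
  INR (length (enum n L s)) <= exp (t * INR L) * (/ lam) ^ s * (1 + 2 * lam / (exp t - 1)) ^ n.
Proof.
  intros Ht Hl Hl1. assert (Hexp : 1 + t < exp t) by (apply exp_ineq1; lra).
  set (q := 1 + 2 * lam / (exp t - 1)).
  assert (Hq : 1 <= q). { unfold q. assert (0 <= 2 * lam / (exp t - 1)).
    { apply Rmult_le_pos; [lra| left; apply Rinv_0_lt_compat; lra]. } lra. }
  assert (Hil : 1 <= / lam). { rewrite <- Rinv_1. apply Rinv_le_contravar; lra. }
  induction n; intros L s.
  - simpl. assert (1 <= exp (t * INR L)). { rewrite <- exp_0. apply exp_le_mono.
      pose proof (pos_INR L). nra. }
    assert (1 <= (/lam) ^ s) by (apply pow_R1_Rle; lra). nra.
  - simpl enum. rewrite length_app, length_map, plus_INR.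
    assert (Hpos : forall L s, 0 <= exp (t * INR L) * (/ lam) ^ s * q ^ n).
    { intros. apply Rmult_le_pos; [apply Rmult_le_pos; [left; apply exp_pos| apply pow_le; lra]| apply pow_le; lra]. }
    destruct s as [|s'].
    + simpl length. simpl INR. pose proof (IHn L 0%nat). pose proof (Hpos L 0%nat).
      rewrite <- tech_pow_Rmult. nra.
    + pose proof (IHn L (S s')) as H1.
      assert (H2 : INR (length (flat_map (fun m => map (ext n (Z.of_nat m)) (enum n (L - m) s')
               ++ map (ext n (- Z.of_nat m)) (enum n (L - m) s')) (seq 1 L)))
        <= lsum (seq 1 L) (fun m => (2 * (exp (t * INR L) * (/ lam) ^ s' * q ^ n)) * exp (- t * INR m))).
      { apply len_flat_map. intros m Hm. apply in_seq in Hm.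
        rewrite length_app, !length_map, plus_INR. pose proof (IHn (L - m)%nat s').
        rewrite minus_INR in H by lia.
        assert (exp (t * (INR L - INR m)) = exp (t * INR L) * exp (- t * INR m)) by (rewrite <- exp_plus; f_equal; ring).
        rewrite H0 in H. lra. }
      rewrite lsum_scal in H2. pose proof (geom t Ht L 1%nat). simpl INR in H.
      replace (-t * (1 - 1)) with 0 in H by ring. rewrite exp_0 in H.
      assert (Hg : 0 <= 2 * (exp (t * INR L) * (/ lam) ^ s' * q ^ n)) by (pose proof (Hpos L s'); lra).
      assert (H3 : INR (length (flat_map (fun m => map (ext n (Z.of_nat m)) (enum n (L - m) s')
               ++ map (ext n (- Z.of_nat m)) (enum n (L - m) s')) (seq 1 L)))
               <= 2 * (exp (t * INR L) * (/ lam) ^ s' * q ^ n) * (1 / (exp t - 1))).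
      { eapply Rle_trans; [exact H2|]. apply Rmult_le_compat_l; auto. }
      eapply Rle_trans. apply Rplus_le_compat; [exact H1| exact H3].
      right. unfold q. simpl pow. field. split; lra.
Qed.

Lemma exp_INR k y : exp (INR k * y) = exp y ^ k.
Proof. induction k; simpl pow. simpl INR. rewrite Rmult_0_l, exp_0; auto.
 rewrite S_INR, <- IHk, <- exp_plus. f_equal; ring. Qed.

Lemma div_le_1 a b : 0 < b -> a <= b -> a / b <= 1.
Proof. intros. unfold Rdiv. apply Rmult_le_reg_r with b; auto.
 rewrite Rmult_assoc, Rinv_l; lra. Qed.

Lemma enum_count n L s (L' : R) : (1 <= s)%nat -> (s <= n)%nat -> INR s / 2 <= L' -> INR L <= L' ->
  INR (length (enum n L s)) <=
    (exp 1 * INR n / INR s * (2 * exp 1 * L' / INR s)) ^ s.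
Proof.
  intros H1 H2 H3 H4.
  assert (Hs : 1 <= INR s) by (apply (le_INR 1); auto).
  assert (Hn : INR s <= INR n) by (apply le_INR; auto).
  assert (HL : 0 < L') by lra.
  set (t := INR s / L'). set (lam := INR s * t / (2 * INR n)).
  assert (Ht : 0 < t) by (unfold t; apply Rdiv_lt_0_compat; lra).
  assert (Hlam : 0 < lam) by (unfold lam; apply Rdiv_lt_0_compat; nra).
  assert (Hlam1 : lam <= 1).
  { replace lam with ((INR s * INR s) / (2 * INR n * L')) by (unfold lam, t; field; lra).
    apply div_le_1; nra. }
  pose proof (enum_len t lam Ht Hlam Hlam1 n L s) as E.
  eapply Rle_trans; [exact E|]. clear E.
  assert (Hexp : 1 + t < exp t) by (apply exp_ineq1; lra).
  assert (A1 : exp (t * INR L) <= exp 1 ^ s).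
  { rewrite <- exp_INR. apply exp_le_mono. unfold t.
    replace (INR s * 1) with (INR s / L' * L') by (field; lra). apply Rmult_le_compat_l; [left; auto|auto]. }
  assert (A2 : (/ lam) ^ s = (2 * INR n * L' / (INR s * INR s)) ^ s).
  { f_equal. unfold lam, t. field. repeat split; lra. }
  assert (A3 : (1 + 2 * lam / (exp t - 1)) ^ n <= exp 1 ^ s).
  { apply Rle_trans with ((1 + INR s / INR n) ^ n).
    - apply pow_incr. split.
      + assert (0 <= 2 * lam / (exp t - 1)) by (apply Rmult_le_pos; [lra| left; apply Rinv_0_lt_compat; lra]). lra.
      + assert (2 * lam / (exp t - 1) <= INR s / INR n); [|lra].
        replace (2 * lam / (exp t - 1)) with ((INR s / INR n) * (t / (exp t - 1))) by (unfold lam; field; lra).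
        rewrite <- (Rmult_1_r (INR s / INR n)) at 2. apply Rmult_le_compat_l.
        * apply Rmult_le_pos; [lra| left; apply Rinv_0_lt_compat; lra].
        * apply div_le_1; lra.
    - apply Rle_trans with (exp (INR s / INR n) ^ n).
      + apply pow_incr. split; [|apply exp_ineq1_le]. assert (0 <= INR s / INR n) by (apply Rmult_le_pos; [lra|left; apply Rinv_0_lt_compat; lra]). lra.
      + rewrite <- exp_INR, <- exp_INR. right. f_equal. field. lra. }
  rewrite A2.
  assert (0 <= (2 * INR n * L' / (INR s * INR s)) ^ s) by (apply pow_le; apply Rmult_le_pos; [nra| left; apply Rinv_0_lt_compat; nra]).
  apply Rle_trans with (exp 1 ^ s * (2 * INR n * L' / (INR s * INR s)) ^ s * exp 1 ^ s).
  - assert (0 <= 2 * lam / (exp t - 1)) by (apply Rmult_le_pos; [lra| left; apply Rinv_0_lt_compat; lra]).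
    apply Rmult_le_compat.
    + apply Rmult_le_pos; [left; apply exp_pos| auto].
    + apply pow_le; lra.
    + apply Rmult_le_compat_r; auto.
    + exact A3.
  - rewrite <- !Rpow_mult_distr. right. f_equal. field. lra.
Qed.

Definition rnd (x : R) : Z := up (x - / 2).

Lemma rnd_spec x : Rabs (x - IZR (rnd x)) <= / 2.
Proof. unfold rnd. destruct (archimed (x - /2)) as [H1 H2]. apply Rabs_le. lra. Qed.

Lemma rnd_0 : rnd 0 = 0%Z.
Proof. unfold rnd. symmetry. apply tech_up; simpl; lra. Qed.

Lemma sumR_ind n x c : sumR n (fun i => if Req_EM_T (x i) 0 then 0 else c) = c * INR (supp_card n x).
Proof. induction n; [unfold supp_card; simpl; lra|]. rewrite sumR_S, supp_card_S, IHn, plus_INR.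
 destruct (Req_EM_T (x n) 0); simpl; lra. Qed.

Lemma nnzZ_le n x K : (nnzZ n (fun i => rnd (K * x i)) <= supp_card n x)%nat.
Proof. induction n; simpl; [lia|]. rewrite supp_card_S.
 destruct (Req_EM_T (x n) 0) as [E|E].
 - rewrite E, Rmult_0_r, rnd_0. simpl. lia.
 - destruct (Z.eqb _ _); lia. Qed.

Lemma sabs_R n z : INR (sabs n z) = sumR n (fun i => Rabs (IZR (z i))).
Proof. induction n; simpl sabs; [reflexivity|]. rewrite plus_INR, IHn, sumR_S. f_equal.
 rewrite <- abs_IZR, INR_IZR_INZ, Zabs2Nat.id_abs. reflexivity. Qed.

Lemma supp_card_abs n x : supp_card n (fun i => Rabs (x i)) = supp_card n x.
Proof. apply Nat.le_antisymm; apply supp_card_mono; intros i _ H HH.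
 - apply H. rewrite HH, Rabs_R0. auto.
 - exact (Rabs_no_R0 _ H HH). Qed.

Lemma vec_round n s x rho X : (supp_card n x <= s)%nat -> (1 <= s)%nat -> 0 < rho -> 0 < X ->
  sumR n (fun i => x i ^ 2) <= rho ^ 2 ->
  (nnzZ n (fun i => rnd (X * sqrt (INR s) / rho * x i)) <= s)%nat /\
  INR (sabs n (fun i => rnd (X * sqrt (INR s) / rho * x i))) <= INR s * (X + / 2) /\
  sumR n (fun i => (x i - IZR (rnd (X * sqrt (INR s) / rho * x i)) / (X * sqrt (INR s) / rho)) ^ 2)
    <= rho ^ 2 / (4 * X ^ 2).
Proof.
  intros Hsupp Hs Hrho HX Hsum.
  assert (Hs' : 1 <= INR s) by (apply (le_INR 1); auto).
  assert (Hsup : INR (supp_card n x) <= INR s) by (apply le_INR; auto).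
  assert (Hsq : 0 < sqrt (INR s)) by (apply sqrt_lt_R0; lra).
  assert (Hsq2 : sqrt (INR s) * sqrt (INR s) = INR s) by (apply sqrt_sqrt; lra).
  set (K := X * sqrt (INR s) / rho).
  assert (HK : 0 < K) by (unfold K; apply Rdiv_lt_0_compat; nra).
  split; [|split].
  - pose proof (nnzZ_le n x K). lia.
  - rewrite sabs_R.
    apply Rle_trans with (sumR n (fun i => K * Rabs (x i) + (if Req_EM_T (x i) 0 then 0 else / 2))).
    + apply sumR_le. intros i _. destruct (Req_EM_T (x i) 0) as [E|E].
      * rewrite E, Rmult_0_r, rnd_0. simpl. rewrite Rabs_R0. lra.
      * pose proof (rnd_spec (K * x i)).
        assert (Rabs (IZR (rnd (K * x i))) <= Rabs (K * x i) + /2).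
        { pose proof (Rabs_triang (K * x i) (IZR (rnd (K * x i)) - K * x i)).
          replace (K * x i + (IZR (rnd (K * x i)) - K * x i)) with (IZR (rnd (K * x i))) in H0 by ring.
          rewrite Rabs_minus_sym in H0. lra. }
        rewrite Rabs_mult, (Rabs_right K) in H0 by lra. lra.
    + rewrite sumR_plus, sumR_ind, sumR_scal.
      assert (HA : 0 <= sumR n (fun i => Rabs (x i))) by (apply sumR_nonneg; intros; apply Rabs_pos).
      assert (CS := CS_supp n (fun i => Rabs (x i))). rewrite supp_card_abs in CS.
      assert (E2 : sumR n (fun i => Rabs (x i) ^ 2) = sumR n (fun i => x i ^ 2)).
      { apply sumR_ext. intros. rewrite <- Rsqr_pow2, <- Rsqr_abs, Rsqr_pow2. auto. }
      rewrite E2 in CS.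
      assert (HS : K * sumR n (fun i => Rabs (x i)) <= X * INR s).
      { apply sq_le_sqrt_bound; [nra|].
        assert (Hsn : 0 <= sumR n (fun i => x i ^ 2)) by (apply sumR_nonneg; intros; apply pow2_ge_0).
        replace ((K * sumR n (fun i => Rabs (x i))) ^ 2) with (K^2 * (sumR n (fun i => Rabs (x i))) ^ 2) by ring.
        assert (HK2 : K ^ 2 = X ^ 2 * INR s / rho ^ 2) by (rewrite <- Hsq2; unfold K; field; lra).
        apply Rle_trans with (K ^ 2 * (INR s * rho ^ 2)).
        - apply Rmult_le_compat_l; [nra|]. apply Rle_trans with (INR (supp_card n x) * sumR n (fun i => x i ^ 2)); auto.
          apply Rmult_le_compat; auto; [apply pos_INR].
        - rewrite HK2. right. field. lra. }
      nra.
  - apply Rle_trans with (sumR n (fun i => if Req_EM_T (x i) 0 then 0 else / (4 * K ^ 2))).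
    + apply sumR_le. intros i _. destruct (Req_EM_T (x i) 0) as [E|E].
      * rewrite E, Rmult_0_r, rnd_0. simpl. lra.
      * pose proof (rnd_spec (K * x i)).
        replace (x i - IZR (rnd (K * x i)) / K) with ((K * x i - IZR (rnd (K * x i))) / K) by (field; lra).
        set (d := K * x i - IZR (rnd (K * x i))) in *.
        assert (d ^ 2 <= / 4). { rewrite <- Rsqr_pow2, Rsqr_abs, Rsqr_pow2. pose proof (Rabs_pos d). nra. }
        replace ((d / K) ^ 2) with (d ^ 2 / K ^ 2) by (field; lra).
        replace (/ (4 * K ^ 2)) with ((/ 4) / K ^ 2) by (field; lra).
        unfold Rdiv. apply Rmult_le_compat_r; [left; apply Rinv_0_lt_compat; nra | auto].
    + rewrite sumR_ind.
      assert (HK2 : K ^ 2 = X ^ 2 * INR s / rho ^ 2) by (rewrite <- Hsq2; unfold K; field; lra).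
      apply Rle_trans with (/ (4 * K ^ 2) * INR s).
      * apply Rmult_le_compat_l; auto. left; apply Rinv_0_lt_compat; nra.
      * rewrite HK2. right. field. repeat split; lra.
Qed.

Definition fl (y : R) : nat := Z.to_nat (up y - 1).

Lemma fl_le y : 0 <= y -> INR (fl y) <= y.
Proof. intros Hy. destruct (archimed y) as [H1 H2]. unfold fl.
 assert (Hz : (1 <= up y)%Z). { apply le_IZR. apply lt_IZR in H1 || idtac.
   assert (0 < IZR (up y)) by lra. apply lt_IZR in H. simpl. apply IZR_le. lia. }
 rewrite INR_IZR_INZ, Z2Nat.id by lia. rewrite minus_IZR. simpl. lra. Qed.

Lemma fl_ge k y : INR k <= y -> (k <= fl y)%nat.
Proof. intros Hk. destruct (archimed y) as [H1 H2]. unfold fl.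
 rewrite INR_IZR_INZ in Hk. assert (IZR (Z.of_nat k) < IZR (up y)) by lra.
 apply lt_IZR in H. lia. Qed.

Definition extT {A} (R' : nat) (p : A) (f : nat -> A) : nat -> A :=
  fun r => if Nat.eqb r R' then p else f r.

Fixpoint tup {A} (d : A) (P : list A) (R' : nat) : list (nat -> A) :=
  match R' with
  | O => [fun _ => d]
  | S R'' => flat_map (fun p => map (extT R'' p) (tup d P R'')) P
  end.

Lemma len_fm {A B} (P : list A) (l : list B) (g : A -> B -> B) :
  length (flat_map (fun p => map (g p) l) P) = (length P * length l)%nat.
Proof. induction P; simpl; auto. rewrite length_app, length_map, IHP. lia. Qed.

Lemma tup_len {A} (d : A) P R' : length (tup d P R') = Nat.pow (length P) R'.
Proof. induction R'; simpl; auto. rewrite len_fm, IHR'. lia. Qed.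

Lemma tup_mem {A} (d : A) P (Q : nat -> A -> Prop) R' :
  (forall r, (r < R')%nat -> exists p, In p P /\ Q r p) ->
  exists f, In f (tup d P R') /\ forall r, (r < R')%nat -> Q r (f r).
Proof. induction R'; intros H.
 - exists (fun _ => d). split; [left; auto| intros; lia].
 - destruct (IHR' ltac:(intros; apply H; lia)) as [f [Hf Hq]].
   destruct (H R' ltac:(lia)) as [p [Hp Hqp]].
   exists (extT R' p f). split.
   + simpl. apply in_flat_map. exists p. split; auto. apply in_map; auto.
   + intros r Hr. unfold extT. destruct (Nat.eqb_spec r R'); [subst; auto| apply Hq; lia]. Qed.

Lemma min_exists (P : nat -> Prop) n : P n -> exists m, P m /\ forall k, P k -> (m <= k)%nat.
Proof. induction n as [n IH] using (well_founded_induction lt_wf). intros Hn.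
 destruct (classic (exists k, (k < n)%nat /\ P k)) as [[k [Hk Pk]]|Hno].
 - exact (IH k Hk Pk).
 - exists n. split; auto. intros k Pk. destruct (Nat.lt_ge_cases k n); auto.
   exfalso; apply Hno; eauto. Qed.

Lemma sumR_minus n f g : sumR n f - sumR n g = sumR n (fun i => f i - g i).
Proof. induction n; simpl; [lra|]. rewrite <- IHn. lra. Qed.

Lemma sumR_prod2 n m A' B' C' D' :
  sumR n (fun i => sumR m (fun j => A' i * B' j + C' i * D' j)) = sumR n A' * sumR m B' + sumR n C' * sumR m D'.
Proof. rewrite <- !sumR_prod, <- sumR_plus. apply sumR_ext. intros. apply sumR_plus. Qed.

Lemma norm1 n f : norm2 n f = 1 -> sumR n (fun i => f i ^ 2) = 1.
Proof. unfold norm2. intros H. assert (0 <= sumR n (fun i => f i ^ 2)) by (apply sumR_nonneg; intros; apply pow2_ge_0).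
 rewrite <- (sqrt_sqrt _ H0), H. ring. Qed.

Lemma normle n f G : norm2 n f <= G -> sumR n (fun i => f i ^ 2) <= G ^ 2.
Proof. unfold norm2. intros H. assert (0 <= sumR n (fun i => f i ^ 2)) by (apply sumR_nonneg; intros; apply pow2_ge_0).
 rewrite <- (sqrt_sqrt _ H0). pose proof (sqrt_pos (sumR n (fun i => f i ^ 2))). nra. Qed.

Lemma err_bound (Rk n1 n2 : nat) (a w b e : nat -> nat -> R) (sig : nat -> R) (Gam X : R) :
  1 <= X -> (forall r, (r < Rk)%nat ->
     sumR n1 (fun i => a r i ^ 2) <= Gam ^ 2 / (4 * X ^ 2) /\
     sumR n2 (fun j => e r j ^ 2) <= 1 / (4 * X ^ 2) /\
     sumR n2 (fun j => b r j ^ 2) <= 4 /\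
     sumR n1 (fun i => w r i ^ 2) = sig r ^ 2) ->
  sumR Rk (fun r => sig r ^ 2) <= Gam ^ 2 ->
  sumR n1 (fun i => sumR n2 (fun j => (sumR Rk (fun r => a r i * b r j + w r i * e r j)) ^ 2))
   <= INR Rk * ((2 * INR Rk * Gam ^ 2 + Gam ^ 2 / 2) / X ^ 2).
Proof.
  intros HX Hr Hsig.
  apply Rle_trans with (sumR n1 (fun i => sumR n2 (fun j => INR Rk * sumR Rk (fun r => (a r i * b r j + w r i * e r j) ^ 2)))).
  { apply sumR_le; intros i _; apply sumR_le; intros j _.
    eapply Rle_trans; [apply CS_supp|]. apply Rmult_le_compat_r.
    - apply sumR_nonneg; intros; apply pow2_ge_0.
    - apply le_INR, supp_card_le. }
  rewrite (sumR_ext n1 _ (fun i => INR Rk * sumR n2 (fun j => sumR Rk (fun r => (a r i * b r j + w r i * e r j) ^ 2))))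
    by (intros; apply sumR_scal).
  rewrite sumR_scal. apply Rmult_le_compat_l; [apply pos_INR|].
  rewrite (sumR_ext n1 _ (fun i => sumR Rk (fun r => sumR n2 (fun j => (a r i * b r j + w r i * e r j) ^ 2))))
    by (intros; apply sumR_exchange).
  rewrite sumR_exchange.
  apply Rle_trans with (sumR Rk (fun r => (2 * Gam ^ 2 + sig r ^ 2 / 2) / X ^ 2)).
  - apply sumR_le. intros r Hrr. destruct (Hr r Hrr) as [Ha [He [Hb Hw]]].
    apply Rle_trans with (sumR n1 (fun i => sumR n2 (fun j => (2 * a r i ^ 2) * b r j ^ 2 + (2 * w r i ^ 2) * e r j ^ 2))).
    + apply sumR_le; intros i _; apply sumR_le; intros j _.
      pose proof (pow2_ge_0 (a r i * b r j - w r i * e r j)). nra.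
    + rewrite sumR_prod2, !sumR_scal, Hw.
      assert (0 <= sumR n1 (fun i => a r i ^ 2)) by (apply sumR_nonneg; intros; apply pow2_ge_0).
      assert (0 <= sumR n2 (fun j => e r j ^ 2)) by (apply sumR_nonneg; intros; apply pow2_ge_0).
      assert (0 <= sumR n2 (fun j => b r j ^ 2)) by (apply sumR_nonneg; intros; apply pow2_ge_0).
      assert (HX2 : 0 < X ^ 2) by nra.
      assert (2 * sumR n1 (fun i => a r i ^ 2) * sumR n2 (fun j => b r j ^ 2) <= 2 * (Gam ^ 2 / (4 * X ^ 2)) * 4).
      { apply Rmult_le_compat; nra. }
      assert (2 * sig r ^ 2 * sumR n2 (fun j => e r j ^ 2) <= 2 * sig r ^ 2 * (1 / (4 * X ^ 2))).
      { apply Rmult_le_compat_l; [nra|auto]. }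
      replace ((2 * Gam ^ 2 + sig r ^ 2 / 2) / X ^ 2) with (2 * (Gam ^ 2 / (4 * X ^ 2)) * 4 + 2 * sig r ^ 2 * (1 / (4 * X ^ 2))) by (field; lra).
      lra.
  - rewrite (sumR_ext Rk _ (fun r => (2 * Gam ^ 2 / X ^ 2) + (/ (2 * X ^ 2)) * sig r ^ 2)) by (intros; field; nra).
    rewrite sumR_plus, (sumR_scal Rk (/ (2 * X ^ 2))).
    assert (Hc : sumR Rk (fun _ => 2 * Gam ^ 2 / X ^ 2) = INR Rk * (2 * Gam ^ 2 / X ^ 2)).
    { clear. induction Rk; [simpl; ring|]. rewrite sumR_S, IHRk, S_INR. ring. }
    rewrite Hc.
    assert (/ (2 * X ^ 2) * sumR Rk (fun r => sig r ^ 2) <= / (2 * X ^ 2) * Gam ^ 2).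
    { apply Rmult_le_compat_l; auto. left; apply Rinv_0_lt_compat; nra. }
    apply Rle_trans with (INR Rk * (2 * Gam ^ 2 / X ^ 2) + / (2 * X ^ 2) * Gam ^ 2); [lra|].
    right. field. nra.
Qed.

Lemma ln0 : ln 0 = 0.
Proof. unfold ln. destruct (Rlt_dec 0 0) as [h|h]; [destruct (Rlt_irrefl 0 h)|auto]. Qed.

Theorem mainTheorem9 (Rk : nat) (Gam : R) (n1 n2 s1 s2 : nat) (eps : R) :
  (1 <= Rk)%nat -> 1 <= Gam ->
  (1 <= s1)%nat -> (s1 <= n1)%nat -> (1 <= s2)%nat -> (s2 <= n2)%nat ->
  0 < eps -> eps < 1 ->
  exists N : nat,
    is_covering_number n1 n2 (S_set n1 n2 s1 s2 Rk Gam) eps N /\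
    ln (INR N) <=
      INR Rk * INR (s1 + s2 + 1) * ln (18 * Gam * INR Rk / eps)
      + INR Rk * INR s1 * ln (exp 1 * INR n1 / INR s1)
      + INR Rk * INR s2 * ln (exp 1 * INR n2 / INR s2).
Proof.
  intros HR HG Hs1 Hn1 Hs2 Hn2 He0 He1.
  assert (HRr : 1 <= INR Rk) by (apply (le_INR 1); auto).
  assert (Hs1r : 1 <= INR s1) by (apply (le_INR 1); auto).
  assert (Hs2r : 1 <= INR s2) by (apply (le_INR 1); auto).
  assert (Hn1r : INR s1 <= INR n1) by (apply le_INR; auto).
  assert (Hn2r : INR s2 <= INR n2) by (apply le_INR; auto).
  set (Y := Gam * INR Rk / eps).
  assert (HY : 1 <= Y).
  { assert (Y - Gam * INR Rk = Gam * INR Rk * (1 - eps) / eps) by (unfold Y; field; lra).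
    assert (0 <= Gam * INR Rk * (1 - eps) / eps).
    { apply Rmult_le_pos; [apply Rmult_le_pos; [apply Rmult_le_pos|]; lra| left; apply Rinv_0_lt_compat; lra]. } assert (1 <= Gam * INR Rk) by nra. lra. }
  set (X := 2 * Y).
  set (K1 := X * sqrt (INR s1) / Gam). set (K2 := X * sqrt (INR s2) / 1).
  set (L1 := fl (INR s1 * (X + / 2))). set (L2 := fl (INR s2 * (X + / 2))).
  set (E1 := enum n1 L1 s1). set (E2 := enum n2 L2 s2).
  set (P := list_prod E1 E2).
  set (z0 := fun _ : nat => 0%Z).
  set (T := tup (z0, z0) P Rk).
  set (mat := fun (f : nat -> (nat -> Z) * (nat -> Z)) => fun i j =>
     sumR Rk (fun r => IZR (fst (f r) i) / K1 * (IZR (snd (f r) j) / K2))).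
  set (cen := map mat T).
  assert (Hcov : is_cover n1 n2 (S_set n1 n2 s1 s2 Rk Gam) eps cen).
  { intros Z [sigma [u [v [Huv [Hsig HZ]]]]].
    pose proof (normle _ _ _ Hsig) as Hsig2.
    assert (Hfacts : forall r, (r < Rk)%nat ->
      ((nnzZ n1 (fun i => rnd (K1 * (sigma r * u r i))) <= s1)%nat /\
       INR (sabs n1 (fun i => rnd (K1 * (sigma r * u r i)))) <= INR s1 * (X + / 2) /\
       sumR n1 (fun i => (sigma r * u r i - IZR (rnd (K1 * (sigma r * u r i))) / K1) ^ 2) <= Gam ^ 2 / (4 * X ^ 2)) /\
      ((nnzZ n2 (fun j => rnd (K2 * v r j)) <= s2)%nat /\
       INR (sabs n2 (fun j => rnd (K2 * v r j))) <= INR s2 * (X + / 2) /\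
       sumR n2 (fun j => (v r j - IZR (rnd (K2 * v r j)) / K2) ^ 2) <= 1 ^ 2 / (4 * X ^ 2)) /\
      sumR n2 (fun j => v r j ^ 2) = 1 /\
      sumR n1 (fun i => (sigma r * u r i) ^ 2) = sigma r ^ 2).
    { intros r Hr. destruct (Huv r Hr) as [Hu [Hv [Hnu Hnv]]].
      apply norm1 in Hnu. apply norm1 in Hnv.
      assert (Hw : sumR n1 (fun i => (sigma r * u r i) ^ 2) = sigma r ^ 2).
      { rewrite (sumR_ext n1 _ (fun i => sigma r ^ 2 * u r i ^ 2)) by (intros; ring).
        rewrite sumR_scal, Hnu. ring. }
      assert (Hsr : sigma r ^ 2 <= Gam ^ 2).
      { eapply Rle_trans; [|exact Hsig2]. apply (term_le_sum Rk (fun r => sigma r ^ 2)); auto.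
        intros; apply pow2_ge_0. }
      split; [|split; [|split; auto]].
      - apply vec_round; [ | auto | lra | unfold X; lra | ].
        + eapply Nat.le_trans; [|exact Hu]. apply supp_card_mono. intros i _ H1 H2. apply H1. rewrite H2; ring.
        + cbv beta. rewrite Hw; auto.
      - apply vec_round; [auto | auto | lra | unfold X; lra | ]. rewrite Hnv. lra. }
    assert (Hr : forall r, (r < Rk)%nat -> exists p, In p P /\
      ((forall i, (i < n1)%nat -> fst p i = rnd (K1 * (sigma r * u r i))) /\
       (forall j, (j < n2)%nat -> snd p j = rnd (K2 * v r j)))).
    { intros r Hr. destruct (Hfacts r Hr) as [[Ha1 [Ha2 _]] [[Hb1 [Hb2 _]] _]].
      destruct (enum_complete n1 L1 s1 _ Ha1 (fl_ge _ _ Ha2)) as [c1 [Hc1 Hc1e]].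
      destruct (enum_complete n2 L2 s2 _ Hb1 (fl_ge _ _ Hb2)) as [c2 [Hc2 Hc2e]].
      exists (c1, c2). split; [apply in_prod; auto| simpl; auto]. }
    destruct (tup_mem (z0, z0) P _ Rk Hr) as [f [Hf Hq]].
    exists (mat f). split; [apply in_map; auto|].
    unfold frob. rewrite <- (sqrt_pow2 eps) by lra. apply sqrt_le_1_alt.
    set (a := fun r i => sigma r * u r i - IZR (rnd (K1 * (sigma r * u r i))) / K1).
    set (b := fun r j => IZR (rnd (K2 * v r j)) / K2).
    set (w := fun r i => sigma r * u r i).
    set (e := fun r j => v r j - b r j).
    rewrite (sumR_ext n1 _ (fun i => sumR n2 (fun j => (sumR Rk (fun r => a r i * b r j + w r i * e r j)) ^ 2))).
    2:{ intros i Hi. apply sumR_ext. intros j Hj. f_equal. unfold mat_sub, mat.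
        rewrite HZ by auto. rewrite sumR_minus. apply sumR_ext. intros r Hrr.
        destruct (Hq r Hrr) as [Hq1 Hq2]. rewrite Hq1, Hq2 by auto.
        unfold e, a, b, w. ring. }
    eapply Rle_trans.
    - apply (err_bound Rk n1 n2 a w b e sigma Gam X); [unfold X; lra| |auto].
      intros r Hrr. destruct (Hfacts r Hrr) as [[_ [_ Ha3]] [[_ [_ Hb3]] [Hv1 Hw1]]].
      rewrite pow1 in Hb3.
      split; [exact Ha3|]. split; [exact Hb3|]. split; [|exact Hw1].
      apply Rle_trans with (sumR n2 (fun j => 2 * v r j ^ 2 + 2 * e r j ^ 2)).
      + apply sumR_le. intros j _. unfold e. pose proof (pow2_ge_0 (2 * v r j - b r j)). nra.
      + rewrite sumR_plus, !sumR_scal, Hv1.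
        assert (1 / (4 * X ^ 2) <= 1). { apply div_le_1; unfold X; nra. }
        unfold e, b. lra.
    - replace (INR Rk * ((2 * INR Rk * Gam ^ 2 + Gam ^ 2 / 2) / X ^ 2))
        with (eps ^ 2 * (/ 2 + / (8 * INR Rk))) by (unfold X, Y; field; repeat split; lra).
      assert (/ (8 * INR Rk) <= / 2) by (apply Rinv_le_contravar; lra).
      assert (0 < eps ^ 2) by nra. nra. }
  destruct (min_exists (fun N => exists c, length c = N /\ is_cover n1 n2 (S_set n1 n2 s1 s2 Rk Gam) eps c)
             (length cen) (ex_intro _ cen (conj eq_refl Hcov))) as [N [[c [Hc Hcc]] Hmin]].
  exists N. split.
  { split; [exists c; auto| intros centers Hcv; apply Hmin; exists centers; auto]. }
  assert (HN : (N <= length cen)%nat) by (apply Hmin; exists cen; auto).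
  assert (HlenT : length cen = Nat.pow (length E1 * length E2) Rk).
  { unfold cen, T. rewrite length_map, tup_len. unfold P. rewrite length_prod. auto. }
  set (G := 18 * Y).
  assert (HG18 : 18 * Gam * INR Rk / eps = G) by (unfold G, Y; field; lra).
  rewrite HG18.
  assert (Hex : 2 <= exp 1) by (pose proof (exp_ineq1_le 1); lra).
  pose proof exp_le_3 as He3.
  assert (HA : forall n s, (1 <= s)%nat -> (s <= n)%nat -> 1 <= exp 1 * INR n / INR s).
  { intros n s H1 H2. assert (1 <= INR s) by (apply (le_INR 1); auto).
    assert (INR s <= INR n) by (apply le_INR; auto).
    assert (1 <= INR n / INR s).
    { apply Rmult_le_reg_r with (INR s); [lra|]. unfold Rdiv. rewrite Rmult_assoc, Rinv_l; lra. }
    replace (exp 1 * INR n / INR s) with (exp 1 * (INR n / INR s)) by (unfold Rdiv; ring). nra. }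
  assert (HE : forall n s L, (1 <= s)%nat -> (s <= n)%nat -> L = fl (INR s * (X + / 2)) ->
      INR (length (enum n L s)) <= (exp 1 * INR n / INR s * G) ^ s).
  { intros n s L H1 H2 HL. assert (1 <= INR s) by (apply (le_INR 1); auto).
    pose proof (HA n s H1 H2).
    eapply Rle_trans; [apply (enum_count n L s (INR s * (X + / 2))); auto|].
    - unfold X. nra.
    - subst L. apply fl_le. unfold X. nra.
    - apply pow_incr. split.
      + apply Rmult_le_pos; [lra|]. apply Rmult_le_pos; [apply Rmult_le_pos; [lra| unfold X; nra]| left; apply Rinv_0_lt_compat; lra].
      + apply Rmult_le_compat_l; [lra|].
        replace (2 * exp 1 * (INR s * (X + / 2)) / INR s) with (exp 1 * (4 * Y + 1)) by (unfold X; field; lra).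
        unfold G. nra. }
  pose proof (HE n1 s1 L1 Hs1 Hn1 eq_refl) as HE1.
  pose proof (HE n2 s2 L2 Hs2 Hn2 eq_refl) as HE2.
  fold E1 in HE1. fold E2 in HE2.
  set (A1 := exp 1 * INR n1 / INR s1) in *. set (A2 := exp 1 * INR n2 / INR s2) in *.
  pose proof (HA n1 s1 Hs1 Hn1) as HA1. pose proof (HA n2 s2 Hs2 Hn2) as HA2.
  fold A1 in HA1. fold A2 in HA2.
  assert (HG1 : 18 <= G) by (unfold G; lra).
  assert (HB : INR N <= ((A1 * G) ^ s1 * (A2 * G) ^ s2) ^ Rk).
  { apply Rle_trans with (INR (length cen)); [apply le_INR; auto|].
    rewrite HlenT, pow_INR, mult_INR. apply pow_incr. split.
    - apply Rmult_le_pos; apply pos_INR.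
    - apply Rmult_le_compat; try apply pos_INR; auto. }
  assert (HlnG : 0 <= ln G) by (rewrite <- ln_1; apply ln_le_mono; lra).
  assert (HlnA1 : 0 <= ln A1) by (rewrite <- ln_1; apply ln_le_mono; lra).
  assert (HlnA2 : 0 <= ln A2) by (rewrite <- ln_1; apply ln_le_mono; lra).
  rewrite !plus_INR. simpl (INR 1).
  assert (Hs1' : 0 <= INR s1) by lra. assert (Hs2' : 0 <= INR s2) by lra.
  destruct (Nat.eq_dec N 0) as [HN0|HN0].
  - rewrite HN0. simpl INR. rewrite ln0.
    assert (0 <= INR Rk * (INR s1 + INR s2 + 1) * ln G) by (apply Rmult_le_pos; [apply Rmult_le_pos|]; lra).
    assert (0 <= INR Rk * INR s1 * ln A1) by (apply Rmult_le_pos; [apply Rmult_le_pos|]; lra).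
    assert (0 <= INR Rk * INR s2 * ln A2) by (apply Rmult_le_pos; [apply Rmult_le_pos|]; lra).
    lra.
  - assert (0 < INR N) by (apply lt_0_INR; lia).
    eapply Rle_trans; [apply ln_le_mono; [auto| exact HB]|].
    assert (0 < A1 * G) by nra. assert (0 < A2 * G) by nra.
    rewrite ln_pow by (apply Rmult_lt_0_compat; apply pow_lt; auto).
    rewrite ln_mult by (apply pow_lt; auto).
    rewrite !ln_pow by auto. rewrite !ln_mult by lra.
    assert (0 <= INR Rk * ln G) by (apply Rmult_le_pos; lra).
    nra.
Qed.
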